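(* For any positive integers $n$ and $k$ there exists a QCQP in $N:=nk$ variables with $m:=k+1$ constraints such that: Assumptions A and C hold; the quadratic eigenvalue multiplicity of the QCQP equals $k$; $k\ge \operatorname{affdim}(\{b(\gamma):\gamma\in\mathcal F\})$ for every semidefinite face $\mathcal F$ of $\Gamma$; but $\mathrm{Opt}\neq\mathrm{Opt}_{\mathrm{SDP}}$ (and hence $\operatorname{conv}(\mathcal D)\neq\mathcal D_{\mathrm{SDP}}$).
   Context: A QCQP is given by integers $N\ge 1$, $m_I,m_E\ge 0$, $m:=m_I+m_E\ge 1$ and, for $i\in[0,m]$ ($[a,b]=\{a,\dots,b\}$, $[n]=[1,n]$), $q_i(x)=x^\top A_ix+2b_i^\top x+c_i$ with $A_i\in\mathbb S^N$, $b_i\in\mathbb R^N$, $c_i\in\mathbb R$. $\mathrm{Opt}:=\inf\{q_0(x): q_i(x)\le 0\ \forall i\in[m_I],\ q_i(x)=0\ \forall i\in[m_I+1,m]\}$; $\mathcal D:=\{(x,t): q_0(x)\le 2t$ and the same constraints$\}$. With $Q_i=\begin{pmatrix}c_i& b_i^\top\\ b_i& A_i\end{pmatrix}$: $\mathrm{Opt}_{\mathrm{SDP}}:=\inf\{\langle Q_0,Y\rangle: Y=\begin{pmatrix}1&x^\top\\ x& X\end{pmatrix}\succeq 0,\ X\in\mathbb S^N,\ \langle Q_i,Y\rangle\le 0\ \forall i\in[m_I],\ \langle Q_i,Y\rangle=0\ \forall i\in[m_I+1,m]\}$; $\mathcal D_{\mathrm{SDP}}:=\{(x,t):\exists X$ with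 $Y\succeq0$, $\langle Q_0,Y\rangle\le 2t$ and the same constraints$\}$. $A(\gamma)=A_0+\sum\gamma_iA_i$, $b(\gamma)=b_0+\sum\gamma_ib_i$; $\Gamma:=\{\gamma\in\mathbb R^m: A(\gamma)\succeq0,\ \gamma_i\ge0\ \forall i\in[m_I]\}$. Assumption A: the QCQP feasible set is nonempty and some $\gamma^*$ with $\gamma^*_i\ge0$ ($i\in[m_I]$) has $A(\gamma^* )\succ0$. Assumption C: $\Gamma$ is a polyhedron. A nonempty face $\mathcal F$ of $\Gamma$ is semidefinite if no $\gamma\in\mathcal F$ has $A(\gamma)\succ0$. The quadratic eigenvalue multiplicity is the largest integer $k$ (with $N=nk$) such that each $A_i=I_k\otimes\mathcal A_i$ for some $\mathcal A_i\in\mathbb S^n$. $\operatorname{affdim}$ is the dimension of the affine hull. *)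

(* Defs.v *)
(* Stdlib reals. Vectors are nat -> R (only indices < N matter),
   matrices nat -> nat -> R. *)
From Stdlib Require Import Reals Lra Lia.
Open Scope R_scope.

Definition vec := nat -> R.
Definition mat := nat -> nat -> R.

Fixpoint rsum (n : nat) (f : nat -> R) : R :=
  match n with O => 0 | S n' => rsum n' f + f n' end.

Definition dot (N : nat) (x y : vec) : R := rsum N (fun i => x i * y i).
Definition quad (N : nat) (A : mat) (x : vec) : R :=
  rsum N (fun i => rsum N (fun j => x i * A i j * x j)).
Definition symm (N : nat) (A : mat) : Prop :=
  forall i j, (i < N)%nat -> (j < N)%nat -> A i j = A j i.
Definition psd (N : nat) (A : mat) : Prop := symm N A /\ forall x : vec, 0 <= quad N A x.
Definition pd (N : nat) (A : mat) : Prop :=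
  symm N A /\ forall x : vec, (exists i, (i < N)%nat /\ x i <> 0) -> 0 < quad N A x.

(* A QCQP: data q_i(x) = x^T A_i x + 2 b_i^T x + c_i for i in [0, m], m = mI + mE *)
Record QCQP := mkQCQP {
  qN : nat; qmI : nat; qmE : nat;
  qA : nat -> mat; qb : nat -> vec; qc : nat -> R }.

Definition qm (P : QCQP) : nat := (qmI P + qmE P)%nat.

Definition wf_QCQP (P : QCQP) : Prop :=
  (1 <= qN P)%nat /\ (1 <= qm P)%nat /\ forall i, (i <= qm P)%nat -> symm (qN P) (qA P i).

Definition qfun (P : QCQP) (i : nat) (x : vec) : R :=
  quad (qN P) (qA P i) x + 2 * dot (qN P) (qb P i) x + qc P i.

Definition feasible (P : QCQP) (x : vec) : Prop :=
  (forall i, (1 <= i <= qmI P)%nat -> qfun P i x <= 0) /\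
  (forall i, (qmI P + 1 <= i <= qm P)%nat -> qfun P i x = 0).

Inductive ereal := EFin (r : R) | EPInf | EMInf.
Definition ele (a b : ereal) : Prop :=
  match a, b with
  | EMInf, _ => True
  | _, EPInf => True
  | EFin x, EFin y => x <= y
  | _, _ => False
  end.
Definition is_inf (S : R -> Prop) (e : ereal) : Prop :=
  (forall v, S v -> ele e (EFin v)) /\
  (forall e', (forall v, S v -> ele e' (EFin v)) -> ele e' e).

Definition IsOpt (P : QCQP) (e : ereal) : Prop :=
  is_inf (fun v => exists x, feasible P x /\ v = qfun P 0 x) e.

(* Y = [[1, x^T]; [x, X]] and Q_i = [[c_i, b_i^T]; [b_i, A_i]], size N+1 *)
Definition Ymat (x : vec) (X : mat) : mat := fun i j =>
  match i, j with
  | O, O => 1 | O, S j' => x j' | S i', O => x i' | S i', S j' => X i' j' end.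
Definition Qmat (P : QCQP) (k : nat) : mat := fun i j =>
  match i, j with
  | O, O => qc P k | O, S j' => qb P k j' | S i', O => qb P k i'
  | S i', S j' => qA P k i' j' end.
Definition frob (n : nat) (A B : mat) : R := rsum n (fun i => rsum n (fun j => A i j * B i j)).
Definition sdpval (P : QCQP) (k : nat) (x : vec) (X : mat) : R :=
  frob (S (qN P)) (Qmat P k) (Ymat x X).

Definition sdp_feasible (P : QCQP) (x : vec) (X : mat) : Prop :=
  symm (qN P) X /\ psd (S (qN P)) (Ymat x X) /\
  (forall i, (1 <= i <= qmI P)%nat -> sdpval P i x X <= 0) /\
  (forall i, (qmI P + 1 <= i <= qm P)%nat -> sdpval P i x X = 0).

Definition IsOptSDP (P : QCQP) (e : ereal) : Prop :=
  is_inf (fun v => exists x X, sdp_feasible P x X /\ v = sdpval P 0 x X) e.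

Definition Dset (P : QCQP) (x : vec) (t : R) : Prop := feasible P x /\ qfun P 0 x <= 2 * t.
Definition DSDP (P : QCQP) (x : vec) (t : R) : Prop :=
  exists X, sdp_feasible P x X /\ sdpval P 0 x X <= 2 * t.

Definition convD (P : QCQP) (x : vec) (t : R) : Prop :=
  exists (K : nat) (lam : nat -> R) (xs : nat -> vec) (ts : nat -> R),
    (forall j, (j < K)%nat -> 0 <= lam j /\ Dset P (xs j) (ts j)) /\
    rsum K lam = 1 /\
    (forall i, (i < qN P)%nat -> x i = rsum K (fun j => lam j * xs j i)) /\
    t = rsum K (fun j => lam j * ts j).

(* multipliers gamma in R^m are represented by functions with support in [1, m] *)
Definition canon (P : QCQP) (g : nat -> R) : Prop :=
  forall i, (i = 0 \/ qm P < i)%nat -> g i = 0.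

Definition Agam (P : QCQP) (g : nat -> R) : mat :=
  fun r s => qA P 0 r s + rsum (S (qm P)) (fun i => match i with O => 0 | _ => g i * qA P i r s end).
Definition bgam (P : QCQP) (g : nat -> R) : vec :=
  fun r => qb P 0 r + rsum (S (qm P)) (fun i => match i with O => 0 | _ => g i * qb P i r end).

Definition Gamma (P : QCQP) (g : nat -> R) : Prop :=
  canon P g /\ psd (qN P) (Agam P g) /\ (forall i, (1 <= i <= qmI P)%nat -> 0 <= g i).

Definition AssumptionA (P : QCQP) : Prop :=
  (exists x, feasible P x) /\
  (exists g, canon P g /\ (forall i, (1 <= i <= qmI P)%nat -> 0 <= g i) /\ pd (qN P) (Agam P g)).

Definition AssumptionC (P : QCQP) : Prop :=
  exists (K : nat) (a : nat -> nat -> R) (beta : nat -> R),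
    forall g, canon P g ->
      (Gamma P g <-> forall j, (j < K)%nat -> rsum (S (qm P)) (fun i => a j i * g i) <= beta j).

Definition face (P : QCQP) (F : (nat -> R) -> Prop) : Prop :=
  (exists g, F g) /\ (forall g, F g -> Gamma P g) /\
  (forall g1 g2 th, F g1 -> F g2 -> 0 <= th <= 1 ->
      F (fun i => th * g1 i + (1 - th) * g2 i)) /\
  (forall g1 g2 th, Gamma P g1 -> Gamma P g2 -> 0 < th < 1 ->
      F (fun i => th * g1 i + (1 - th) * g2 i) -> F g1 /\ F g2).

Definition semidefinite_face (P : QCQP) (F : (nat -> R) -> Prop) : Prop :=
  face P F /\ ~ (exists g, F g /\ pd (qN P) (Agam P g)).

(* affdim S <= d  (S subset of R^N): the affine hull of S is contained in an
   affine subspace p + span(v_0..v_{d-1}) *)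
Definition affdim_le (N : nat) (S : vec -> Prop) (d : nat) : Prop :=
  exists (p : vec) (v : nat -> vec), forall s, S s ->
    exists c : nat -> R, forall i, (i < N)%nat -> s i = p i + rsum d (fun j => c j * v j i).

(* A_i = I_k (x) B_i for some B_i in S^n, with N = n k, index (a,p) |-> a*n+p *)
Definition kron_structure (P : QCQP) (k : nat) : Prop :=
  exists n : nat, qN P = (n * k)%nat /\
    forall i, (i <= qm P)%nat -> exists B : mat, symm n B /\
      forall a b p q, (a < k)%nat -> (b < k)%nat -> (p < n)%nat -> (q < n)%nat ->
        qA P i (a * n + p)%nat (b * n + q)%nat = if Nat.eqb a b then B p q else 0.

Definition eig_multiplicity (P : QCQP) (k : nat) : Prop :=
  kron_structure P k /\ forall k', kron_structure P k' -> (k' <= k)%nat.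

(* Main.v *)
Require Import Defs.
From Stdlib Require Import Reals Lra Lia Arith Classical.
Open Scope R_scope.

Lemma rsum_S n f : rsum (S n) f = rsum n f + f n.
Proof. reflexivity. Qed.

Lemma rsum_ext n f g : (forall i, (i < n)%nat -> f i = g i) -> rsum n f = rsum n g.
Proof. induction n; intros H; [reflexivity|]. rewrite !rsum_S, IHn, H; auto. Qed.

Lemma rsum_zero n f : (forall i, (i < n)%nat -> f i = 0) -> rsum n f = 0.
Proof. induction n; intros H; [reflexivity|]. rewrite rsum_S, IHn, H; auto; lra. Qed.

Lemma rsum_single n f m : (m < n)%nat -> (forall i, (i < n)%nat -> i <> m -> f i = 0) -> rsum n f = f m.
Proof.
  induction n; intros Hm H; [lia|]. rewrite rsum_S.
  destruct (Nat.eq_dec m n).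
  - subst. rewrite rsum_zero; [lra|]. intros; apply H; lia.
  - rewrite IHn; try lia. rewrite (H n); try lia. lra. intros; apply H; lia.
Qed.

Lemma rsum_shift n f : rsum (S n) f = f 0%nat + rsum n (fun j => f (S j)).
Proof. induction n; [simpl; lra|]. rewrite rsum_S, IHn, !rsum_S. lra. Qed.

Lemma rsum_le n f g : (forall i, (i < n)%nat -> f i <= g i) -> rsum n f <= rsum n g.
Proof. induction n; intros H; [simpl; lra|]. rewrite !rsum_S. pose proof (H n ltac:(lia)). pose proof (IHn ltac:(intros; apply H; lia)). lra. Qed.

Lemma rsum_nonneg n f : (forall i, (i < n)%nat -> 0 <= f i) -> 0 <= rsum n f.
Proof. intros H. replace 0 with (rsum n (fun _ => 0)). apply rsum_le; auto. apply rsum_zero; auto. Qed.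

Lemma rsum_term_le n f m : (m < n)%nat -> (forall i, (i < n)%nat -> 0 <= f i) -> f m <= rsum n f.
Proof.
  induction n; intros Hm H; [lia|]. rewrite rsum_S.
  destruct (Nat.eq_dec m n).
  - subst. pose proof (rsum_nonneg n f ltac:(intros; apply H; lia)). lra.
  - pose proof (IHn ltac:(lia) ltac:(intros; apply H; lia)). pose proof (H n ltac:(lia)). lra.
Qed.

Lemma rsum_sq_le n f : (forall i, (i < n)%nat -> 0 <= f i) ->
  0 <= rsum n f /\ rsum n (fun i => f i * f i) <= rsum n f * rsum n f.
Proof.
  induction n; intros H; [simpl; lra|]. rewrite !rsum_S.
  destruct (IHn ltac:(intros; apply H; lia)). pose proof (H n ltac:(lia)). split; nra.
Qed.

Lemma quad_diag n A x : (forall i j, (i < n)%nat -> (j < n)%nat -> i <> j -> A i j = 0) ->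
  quad n A x = rsum n (fun i => A i i * (x i * x i)).
Proof.
  intros H. unfold quad. apply rsum_ext. intros i Hi.
  rewrite (rsum_single n _ i); auto. lra. intros j Hj Hne. rewrite H; auto. lra.
Qed.

Lemma frob_diag n A B : (forall i j, (i < n)%nat -> (j < n)%nat -> i <> j -> B i j = 0) ->
  frob n A B = rsum n (fun i => A i i * B i i).
Proof.
  intros H. unfold frob. apply rsum_ext. intros i Hi.
  rewrite (rsum_single n _ i); auto. intros j Hj Hne. rewrite H; auto. lra.
Qed.

Lemma inf_exists (S : R -> Prop) : exists e, is_inf S e.
Proof.
  destruct (classic (exists v, S v)) as [[v0 Hv0]|Hne].
  - destruct (classic (exists m, forall v, S v -> m <= v)) as [[m Hm]|Hnb].
    + destruct (completeness (fun y => S (- y))) as [l [Hub Hl]].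
      * exists (- m). intros y Hy. specialize (Hm _ Hy). lra.
      * exists (- v0). rewrite Ropp_involutive. auto.
      * exists (EFin (- l)). split.
        -- intros v Hv. simpl. assert (- v <= l). apply Hub. rewrite Ropp_involutive; auto. lra.
        -- intros [r| |] He; simpl; auto.
           ++ assert (l <= - r). apply Hl. intros y Hy. specialize (He _ Hy). simpl in He. lra. lra.
           ++ specialize (He _ Hv0). simpl in He. auto.
    + exists EMInf. split. intros; simpl; auto.
      intros [r| |] He; simpl; auto.
      * apply Hnb. exists r. intros v Hv. specialize (He _ Hv). simpl in He. auto.
      * specialize (He _ Hv0). simpl in He. auto.
  - exists EPInf. split. intros v Hv. exfalso; apply Hne; eauto.
    intros [r| |] _; simpl; auto.
Qed.

Definition Dd (k i p : nat) : R :=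
  match i with
  | O => if (p =? 0)%nat then 0 else 1
  | S _ => if (i =? S k)%nat then (if (p =? 0)%nat then 1 else 0) else 0
  end.
Definition mA (n k i : nat) : mat := fun r s => if (r =? s)%nat then Dd k i (r mod n) else 0.
Definition mb (n k i : nat) : vec := fun r =>
  match i with
  | O => if (r mod n =? 0)%nat then 1 else 0
  | S j => if ((r =? j * n)%nat && (j <? k)%nat)%bool then -1 else 0
  end.
Definition mc (k i : nat) : R := if (i =? S k)%nat then -1 else 0.
Definition Pex (n k : nat) : QCQP := mkQCQP (n * k) k 1 (mA n k) (mb n k) (mc k).

Lemma mod_lem n a p : (p < n)%nat -> ((a * n + p) mod n = p)%nat.
Proof. intros. rewrite Nat.add_comm, Nat.Div0.mod_add, Nat.mod_small; auto. Qed.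

Lemma eq_lem n a b p q : (p < n)%nat -> (q < n)%nat -> (a * n + p)%nat = (b * n + q)%nat -> a = b /\ p = q.
Proof.
  intros Hp Hq E. assert (p = q). rewrite <- (mod_lem n a p), <- (mod_lem n b q), E; auto.
  subst. split; auto. apply (Nat.mul_cancel_r a b n); lia.
Qed.

Lemma Dd_nonneg k i p : 0 <= Dd k i p.
Proof. destruct i; simpl; repeat destruct (_ =? _)%nat; lra. Qed.

Lemma Dd_mid k j p : (j < k)%nat -> Dd k (S j) p = 0.
Proof. intros. simpl. destruct (j =? k)%nat eqn:E. apply Nat.eqb_eq in E; lia. auto. Qed.

Lemma Dd_top k p : Dd k (S k) p = if (p =? 0)%nat then 1 else 0.
Proof. simpl. rewrite Nat.eqb_refl. auto. Qed.

Lemma mA_off n k i r s : r <> s -> mA n k i r s = 0.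
Proof. intros. unfold mA. destruct (Nat.eqb_spec r s); auto; lia. Qed.

Lemma quad_mA n k i x : quad (n * k) (mA n k i) x = rsum (n * k) (fun r => Dd k i (r mod n) * (x r * x r)).
Proof.
  rewrite quad_diag. apply rsum_ext. intros. unfold mA. rewrite Nat.eqb_refl. auto.
  intros; apply mA_off; auto.
Qed.

Lemma dot_mid n k j x : (1 <= n)%nat -> (j < k)%nat -> dot (n * k) (mb n k (S j)) x = - x (j * n)%nat.
Proof.
  intros Hn Hj. unfold dot. rewrite (rsum_single _ _ (j * n)%nat). simpl.
  rewrite Nat.eqb_refl. apply Nat.ltb_lt in Hj. rewrite Hj. simpl. lra. nia.
  intros i Hi Hne. simpl. destruct (Nat.eqb_spec i (j * n)); [lia|]. simpl. lra.
Qed.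

Lemma dot_top n k x : dot (n * k) (mb n k (S k)) x = 0.
Proof.
  unfold dot. apply rsum_zero. intros. simpl. rewrite Nat.ltb_irrefl, Bool.andb_false_r. lra.
Qed.

Lemma feas_lb n k x : (1 <= n)%nat -> (1 <= k)%nat -> feasible (Pex n k) x -> 2 <= qfun (Pex n k) 0 x.
Proof.
  intros Hn Hk [Hi He]. unfold qm in He. simpl in Hi, He.
  assert (Hy : forall r, (r < n * k)%nat -> (r mod n = 0)%nat -> 0 <= x r).
  { intros r Hr Hm. pose proof (Nat.div_mod_eq r n) as Er. rewrite Hm in Er.
    assert (Hj : (r / n < k)%nat). apply Nat.Div0.div_lt_upper_bound; lia.
    specialize (Hi (S (r / n)) ltac:(lia)). unfold qfun in Hi. simpl qN in Hi. simpl qA in Hi.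
    simpl qb in Hi. simpl qc in Hi.
    rewrite quad_mA, dot_mid in Hi; auto.
    rewrite rsum_zero in Hi. 2:{ intros. rewrite Dd_mid; auto. lra. }
    unfold mc in Hi. destruct (Nat.eqb_spec (S (r / n)) (S k)); [lia|].
    replace (r / n * n)%nat with r in Hi by lia. lra. }
  specialize (He (k + 1)%nat ltac:(lia)). rewrite Nat.add_1_r in He.
  unfold qfun in He. simpl qN in He. simpl qA in He. simpl qb in He. simpl qc in He.
  rewrite quad_mA, dot_top in He. unfold mc in He. rewrite Nat.eqb_refl in He.
  set (f := fun r => if (r mod n =? 0)%nat then x r else 0).
  assert (Hf : forall r, (r < n * k)%nat -> 0 <= f r).
  { intros. unfold f. destruct (Nat.eqb_spec (r mod n) 0); [apply Hy; auto|lra]. }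
  assert (E1 : rsum (n * k) (fun i => f i * f i) = 1).
  { rewrite <- (rsum_ext _ (fun r => Dd k (S k) (r mod n) * (x r * x r))). lra.
    intros. rewrite Dd_top. unfold f. destruct (_ =? _)%nat; lra. }
  destruct (rsum_sq_le _ f Hf) as [H0 H1].
  unfold qfun. simpl qN. simpl qA. simpl qb. simpl qc. rewrite quad_mA.
  assert (Ed : dot (n * k) (mb n k 0) x = rsum (n * k) f).
  { unfold dot. apply rsum_ext. intros. unfold f. simpl. destruct (_ =? _)%nat; lra. }
  rewrite Ed. replace (mc k 0) with 0 by reflexivity.
  pose proof (rsum_nonneg (n * k) (fun r => Dd k 0 (r mod n) * (x r * x r))
     ltac:(intros; pose proof (Dd_nonneg k 0 (i mod n)); nra)).
  assert (1 <= rsum (n * k) f) by nra. lra.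
Qed.

Definition x0 : vec := fun _ => 0.
Definition X0 : mat := fun i j => if ((i =? j)%nat && (i =? 0)%nat)%bool then 1 else 0.

Lemma Y_off i j : i <> j -> Ymat x0 X0 i j = 0.
Proof.
  intros H. destruct i, j; simpl; auto; try lia; unfold x0; auto.
  unfold X0. destruct (Nat.eqb_spec i j); [lia|]. auto.
Qed.

Lemma Y_diag_nonneg i : 0 <= Ymat x0 X0 i i.
Proof. destruct i; simpl; [lra|]. unfold X0. destruct (_ && _)%bool; lra. Qed.

Lemma sdpval_pt n k i : (1 <= n)%nat -> (1 <= k)%nat ->
  sdpval (Pex n k) i x0 X0 = mc k i + Dd k i 0.
Proof.
  intros Hn Hk. unfold sdpval. simpl qN. rewrite frob_diag by (intros; apply Y_off; auto).
  rewrite rsum_shift. simpl (Ymat x0 X0 0%nat 0%nat). simpl (Qmat (Pex n k) i 0%nat 0%nat).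
  rewrite (rsum_single _ _ 0%nat). simpl. unfold mA, X0. simpl. rewrite Nat.Div0.mod_0_l by lia. lra.
  nia. intros j Hj Hne. simpl. unfold X0. rewrite Nat.eqb_refl. destruct (Nat.eqb_spec j 0); [lia|]. simpl. lra.
Qed.

Lemma sdp_pt n k : (1 <= n)%nat -> (1 <= k)%nat -> sdp_feasible (Pex n k) x0 X0.
Proof.
  intros Hn Hk. split; [|split; [|split]].
  - intros i j _ _. unfold X0. destruct (Nat.eqb_spec i j), (Nat.eqb_spec j i); try lia.
    subst; auto. auto.
  - split.
    + intros i j Hi Hj. destruct (Nat.eq_dec i j). subst; auto. rewrite !Y_off; auto.
    + intros z. rewrite quad_diag by (intros; apply Y_off; auto).
      apply rsum_nonneg. intros. pose proof (Y_diag_nonneg i). nra.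
  - intros i Hi. simpl in Hi. rewrite sdpval_pt; auto. destruct i; [lia|].
    rewrite Dd_mid by lia. unfold mc. destruct (Nat.eqb_spec (S i) (S k)); [lia|]. lra.
  - intros i Hi. unfold qm in Hi. simpl in Hi. assert (i = S k) by lia. subst.
    rewrite sdpval_pt; auto. rewrite Dd_top. unfold mc. rewrite Nat.eqb_refl. simpl. lra.
Qed.

Lemma sdp_val0 n k : (1 <= n)%nat -> (1 <= k)%nat -> sdpval (Pex n k) 0 x0 X0 = 0.
Proof. intros. rewrite sdpval_pt; auto. unfold mc, Dd. simpl. lra. Qed.

Lemma Agam_eq n k g r s : Agam (Pex n k) g r s = mA n k 0 r s + g (S k) * mA n k (S k) r s.
Proof.
  unfold Agam, qm. simpl qmI. simpl qmE. replace (k + 1)%nat with (S k) by lia.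
  rewrite rsum_shift, rsum_S, rsum_zero. simpl qA. lra.
  intros j Hj. simpl qA. unfold mA. destruct (_ =? _)%nat; [rewrite Dd_mid; auto|]; lra.
Qed.

Lemma Agam_off n k g r s : r <> s -> Agam (Pex n k) g r s = 0.
Proof. intros. rewrite Agam_eq, !mA_off; auto. lra. Qed.

Lemma Agam_diag n k g r : Agam (Pex n k) g r r =
  if (r mod n =? 0)%nat then g (S k) else 1.
Proof.
  rewrite Agam_eq. unfold mA. rewrite Nat.eqb_refl, Dd_top. simpl.
  destruct (_ =? _)%nat; lra.
Qed.

Lemma Agam_symm n k g : symm (n * k) (Agam (Pex n k) g).
Proof. intros i j _ _. destruct (Nat.eq_dec i j). subst; auto. rewrite !Agam_off; auto. Qed.

Lemma quad_Agam n k g x : quad (n * k) (Agam (Pex n k) g) x =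
  rsum (n * k) (fun r => Agam (Pex n k) g r r * (x r * x r)).
Proof. apply quad_diag. intros; apply Agam_off; auto. Qed.

Definition e0 : vec := fun r => if (r =? 0)%nat then 1 else 0.

Lemma quad_e0 N A : (1 <= N)%nat -> (forall i j, (i < N)%nat -> (j < N)%nat -> i <> j -> A i j = 0) ->
  quad N A e0 = A 0%nat 0%nat.
Proof.
  intros HN H. rewrite quad_diag; auto. rewrite (rsum_single _ _ 0%nat); auto.
  unfold e0; simpl; lra. intros i _ Hi. unfold e0. destruct (Nat.eqb_spec i 0); [lia|]. lra.
Qed.

Lemma psd_iff n k g : (1 <= n)%nat -> (1 <= k)%nat ->
  (psd (n * k) (Agam (Pex n k) g) <-> 0 <= g (S k)).
Proof.
  intros Hn Hk. split.
  - intros [_ H]. specialize (H e0). rewrite quad_e0 in H by (try nia; intros; apply Agam_off; auto).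
    rewrite Agam_diag, Nat.Div0.mod_0_l in H by lia. simpl in H. auto.
  - intros H. split. apply Agam_symm. intros x. rewrite quad_Agam. apply rsum_nonneg.
    intros. rewrite Agam_diag. destruct (_ =? _)%nat; nra.
Qed.

Lemma assumA n k : (1 <= n)%nat -> (1 <= k)%nat -> AssumptionA (Pex n k).
Proof.
  intros Hn Hk. split.
  - exists e0. split.
    + intros i Hi. simpl in Hi. destruct i as [|j]; [lia|]. unfold qfun. simpl qN; simpl qA; simpl qb; simpl qc.
      rewrite quad_mA, rsum_zero by (intros; rewrite Dd_mid by lia; lra).
      unfold dot. rewrite (rsum_single _ _ 0%nat).
      2: nia.
      2:{ intros i _ Hi'. unfold e0. destruct (Nat.eqb_spec i 0); [lia|]. lra. }
      unfold mc. destruct (Nat.eqb_spec (S j) (S k)); [lia|].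
      unfold mb, e0. simpl. destruct (_ && _)%bool; lra.
    + intros i Hi. unfold qm in Hi. simpl in Hi. assert (i = S k) by lia. subst.
      unfold qfun. simpl qN; simpl qA; simpl qb; simpl qc.
      rewrite quad_e0, dot_top by (try nia; intros; apply mA_off; auto).
      unfold mA, mc. rewrite Nat.eqb_refl, Nat.eqb_refl, Dd_top, Nat.Div0.mod_0_l by lia. simpl. lra.
  - exists (fun i => if (i =? S k)%nat then 1 else 0). split; [|split].
    + intros i Hi. unfold qm in Hi. simpl in Hi. destruct (Nat.eqb_spec i (S k)); [lia|]. auto.
    + intros i Hi. destruct (_ =? _)%nat; lra.
    + split. apply Agam_symm. intros x [i [Hi Hx]]. simpl qN. rewrite quad_Agam.
      apply Rlt_le_trans with (x i * x i).
      { assert (x i * x i > 0). { destruct (Rlt_or_le 0 (x i)); [nra|]. assert (x i < 0) by lra. nra. } lra. }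
      eapply Rle_trans; [|apply (rsum_term_le _ _ i); auto].
      * cbv beta. rewrite Agam_diag, Nat.eqb_refl. destruct (_ =? _)%nat; lra.
      * intros. cbv beta. rewrite Agam_diag, Nat.eqb_refl. destruct (_ =? _)%nat; nra.
Qed.

Lemma asum_lem n k g j : (j < S k)%nat ->
  rsum (S (qm (Pex n k))) (fun i => (if (i =? S j)%nat then -1 else 0) * g i) = - g (S j).
Proof.
  intros Hj. unfold qm; simpl qmI; simpl qmE. rewrite (rsum_single _ _ (S j)).
  rewrite Nat.eqb_refl. lra. lia. intros i _ Hi. destruct (Nat.eqb_spec i (S j)); [lia|]. lra.
Qed.

Lemma assumC n k : (1 <= n)%nat -> (1 <= k)%nat -> AssumptionC (Pex n k).
Proof.
  intros Hn Hk. exists (S k), (fun j i => if (i =? S j)%nat then -1 else 0), (fun _ => 0).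
  intros g Hc. split.
  - intros [_ [Hp Hi]]. apply psd_iff in Hp; auto. intros j Hj. rewrite asum_lem by auto.
    destruct (Nat.eq_dec j k). subst; lra. simpl in Hi. pose proof (Hi (S j) ltac:(lia)). lra.
  - intros H. split; [auto|split].
    + apply psd_iff; auto. specialize (H k ltac:(lia)). rewrite asum_lem in H by lia. lra.
    + intros i Hi. simpl in Hi. destruct i as [|j]; [lia|]. specialize (H j ltac:(lia)).
      rewrite asum_lem in H by lia. lra.
Qed.

Lemma kron_k n k : (1 <= n)%nat -> (1 <= k)%nat -> kron_structure (Pex n k) k.
Proof.
  intros Hn Hk. exists n. split; [reflexivity|]. intros i _.
  exists (fun p q => if (p =? q)%nat then Dd k i p else 0). split.
  - intros p q _ _. destruct (Nat.eqb_spec p q), (Nat.eqb_spec q p); try lia; subst; auto.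
  - intros a b p q Ha Hb Hp Hq. simpl qA. unfold mA.
    destruct (Nat.eqb_spec (a * n + p) (b * n + q)) as [E|E].
    + destruct (eq_lem n a b p q Hp Hq E). subst. rewrite !Nat.eqb_refl, mod_lem; auto.
    + destruct (Nat.eqb_spec a b); auto. subst. destruct (Nat.eqb_spec p q); auto. subst. lia.
Qed.

Lemma kron_max n k k' : (1 <= n)%nat -> (1 <= k)%nat -> kron_structure (Pex n k) k' -> (k' <= k)%nat.
Proof.
  intros Hn Hk [n' [E H]]. simpl in E. destruct (Nat.le_gt_cases k' k) as [Hle|Hgt]; auto. exfalso.
  assert (Hn' : (1 <= n' < n)%nat) by nia.
  destruct (H (S k) ltac:(unfold qm; simpl; lia)) as [B [_ HB]].
  pose proof (HB 0%nat 0%nat 0%nat 0%nat ltac:(lia) ltac:(lia) ltac:(lia) ltac:(lia)) as H0.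
  pose proof (HB 1%nat 1%nat 0%nat 0%nat ltac:(lia) ltac:(lia) ltac:(lia) ltac:(lia)) as H1.
  simpl qA in H0, H1. simpl in H0, H1. rewrite Nat.add_0_r in H1.
  rewrite <- H1 in H0. unfold mA in H0. rewrite !Nat.eqb_refl, !Dd_top in H0.
  rewrite Nat.Div0.mod_0_l in H0 by lia. simpl in H0.
  destruct (Nat.eqb_spec ((n' + 0) mod n) 0) as [Z|Z]; [|lra].
  rewrite Nat.mod_small in Z; lia.
Qed.

Lemma bgam_eq n k g r : bgam (Pex n k) g r = mb n k 0 r + rsum k (fun j => g (S j) * mb n k (S j) r).
Proof.
  unfold bgam, qm. simpl qmI; simpl qmE; simpl qb. replace (k + 1)%nat with (S k) by lia.
  rewrite rsum_shift, rsum_S. replace (mb n k (S k) r) with 0 by (unfold mb; rewrite Nat.ltb_irrefl, Bool.andb_false_r; auto). change (mb n k 0 r) with (if (r mod n =? 0)%nat then 1 else 0). lra.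
Qed.

Lemma affdim_ok n k F : affdim_le (qN (Pex n k))
   (fun v => exists g, F g /\ forall r, (r < qN (Pex n k))%nat -> v r = bgam (Pex n k) g r) k.
Proof.
  exists (mb n k 0), (fun j => mb n k (S j)). intros s [g [_ Hg]].
  exists (fun j => g (S j)). intros i Hi. rewrite Hg, bgam_eq; auto.
Qed.

Lemma conv_lb K (lam ts : nat -> R) : (forall j, (j < K)%nat -> 0 <= lam j /\ 1 <= ts j) ->
  rsum K lam <= rsum K (fun j => lam j * ts j).
Proof. intros H. apply rsum_le. intros i Hi. destruct (H i Hi). nra. Qed.

Theorem mainTheorem15 : forall n k : nat, (1 <= n)%nat -> (1 <= k)%nat ->
  exists P : QCQP,
    qN P = (n * k)%nat /\ qm P = (k + 1)%nat /\ wf_QCQP P /\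
    AssumptionA P /\ AssumptionC P /\
    eig_multiplicity P k /\
    (forall F, semidefinite_face P F ->
       affdim_le (qN P) (fun v => exists g, F g /\ forall r, (r < qN P)%nat -> v r = bgam P g r) k) /\
    (exists e1 e2, IsOpt P e1 /\ IsOptSDP P e2 /\ e1 <> e2) /\
    ~ (forall (x : vec) (t : R), convD P x t <-> DSDP P x t).
Proof.
  intros n k Hn Hk. exists (Pex n k).
  split; [reflexivity|]. split; [reflexivity|]. split.
  { split; [simpl; nia|split; [unfold qm; simpl; lia|]].
    intros i _ r s _ _. simpl. unfold mA. destruct (Nat.eqb_spec r s), (Nat.eqb_spec s r); try lia; subst; auto. }
  split; [apply assumA; auto|]. split; [apply assumC; auto|].
  split; [split; [apply kron_k; auto|intros k' Hk'; apply (kron_max n k k'); auto]|].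
  split. { intros F _. apply affdim_ok. } split.
  - destruct (inf_exists (fun v => exists x, feasible (Pex n k) x /\ v = qfun (Pex n k) 0%nat x)) as [e1 H1].
    destruct (inf_exists (fun v => exists x X, sdp_feasible (Pex n k) x X /\ v = sdpval (Pex n k) 0%nat x X)) as [e2 H2].
    exists e1, e2. split; [exact H1|split; [exact H2|]].
    intros E. subst e2.
    assert (A1 : ele (EFin 2) e1).
    { apply H1. intros v [x [Hx ->]]. simpl. apply feas_lb; auto. }
    assert (A2 : ele e1 (EFin 0)).
    { apply H2. exists x0, X0. split. apply sdp_pt; auto. rewrite sdp_val0; auto. }
    destruct e1; simpl in *; auto; lra.
  - intros Hiff. destruct (proj2 (Hiff x0 0)) as [K [lam [xs [ts [Hj [Hs [_ Ht]]]]]]].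
    { exists X0. split. apply sdp_pt; auto. rewrite sdp_val0; auto. lra. }
    assert (rsum K lam <= rsum K (fun j => lam j * ts j)).
    { apply conv_lb. intros j Hjk. destruct (Hj j Hjk) as [Hl [Hf Hq]]. split; auto.
      pose proof (feas_lb n k (xs j) Hn Hk Hf). lra. }
    lra.
Qed.
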